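(* Let $D>0$ and $\ell_0=\sqrt{8Dt}$. The function $$E^{(0)}(x,y,z,t)=\operatorname{erfc}\Bigl(\frac{x}{\ell_0}\Bigr)\operatorname{erfc}\Bigl(\frac{y}{\ell_0}\Bigr)+\operatorname{erfc}\Bigl(\frac{z}{\ell_0}\Bigr)\operatorname{erfc}\Bigl(\frac{x+y+z}{\ell_0}\Bigr)-\operatorname{erfc}\Bigl(\frac{x+z}{\ell_0}\Bigr)\operatorname{erfc}\Bigl(\frac{y+z}{\ell_0}\Bigr)$$ satisfies, for $t>0$, $$\partial_tE=2D\bigl[\partial_x^2+\partial_y^2+\partial_z^2-\partial_x\partial_z-\partial_y\partial_z\bigr]E,$$ together with the consistency conditions $E^{(0)}(x,y,z,t)=E^{(0)}(y,x,z,t)$, $E^{(0)}(x,0,z,t)=\operatorname{erfc}(x/\ell_0)$, $E^{(0)}(0,y,z,t)=\operatorname{erfc}(y/\ell_0)$, $E^{(0)}(x,y,0,t)=\operatorname{erfc}((x+y)/\ell_0)$, and $E^{(0)}(x,y,z,t)\to0$ as $t\to0^+$ for $x,y,z>0$. It is the two-interval probability for an initially fully occupied lattice, and $E^{(0)}(x,y,z,t)\to\operatorname{erfc}(x/\ell_0)\operatorname{erfc}(y/\ell_0)$ as $z\to\infty$.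
   Context: In the continuum limit of the one-dimensional coagulation-diffusion process with diffusion constant $D$, $E(x,y,z,t)$ denotes the probability of two empty intervals of lengths at least $x$ and $y$ separated by distance $z$ at time $t$; for the initially full lattice the single-interval probability is $E(x,t)=\operatorname{erfc}(x/\ell_0)$. *)

(* Defs.v *)
From Stdlib Require Import Reals Lra.
Open Scope R_scope.

Definition gauss (s : R) : R := exp (- s ^ 2).

Lemma gauss_cont : forall x, continuity_pt gauss x.
Proof.
  intro x. apply derivable_continuous_pt. unfold gauss. reg.
Qed.

Definition gauss_int (u : R) : R :=
  match Rle_dec 0 u with
  | left h => RiemannInt (@continuity_implies_RiemannInt gauss _ _ h (fun x _ => gauss_cont x))
  | right h =>
      - RiemannInt (@continuity_implies_RiemannInt gauss _ _
                      (Rlt_le _ _ (Rnot_le_lt _ _ h)) (fun x _ => gauss_cont x))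
  end.

Definition erf (u : R) : R := 2 / sqrt PI * gauss_int u.
Definition erfc (u : R) : R := 1 - erf u.

Definition ell0 (D t : R) : R := sqrt (8 * D * t).

Definition E0 (D x y z t : R) : R :=
  let l := ell0 D t in
  erfc (x / l) * erfc (y / l)
  + erfc (z / l) * erfc ((x + y + z) / l)
  - erfc ((x + z) / l) * erfc ((y + z) / l).

(* Main.v *)
Require Import Defs.
From Stdlib Require Import Reals Lra.
Open Scope R_scope.

Lemma dpl_ext (f g : R -> R) x l :
  (forall s, f s = g s) -> derivable_pt_lim g x l -> derivable_pt_lim f x l.
Proof.
  intros Hfg Hg eps He. destruct (Hg eps He) as [d Hd]. exists d.
  intros h Hh Hh'. rewrite !Hfg. apply Hd; auto.
Qed.

Lemma dpl_eq (f : R -> R) x l1 l2 :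
  l1 = l2 -> derivable_pt_lim f x l1 -> derivable_pt_lim f x l2.
Proof. intros ->; auto. Qed.

Lemma dpl_local (f g : R -> R) x l d :
  0 < d -> (forall s, Rabs (s - x) < d -> f s = g s) ->
  derivable_pt_lim g x l -> derivable_pt_lim f x l.
Proof.
  intros Hd Hfg Hg eps He. destruct (Hg eps He) as [d' Hd']. 
  assert (Hm : 0 < Rmin d d') by (apply Rmin_pos; [lra | apply cond_pos]).
  exists (mkposreal _ Hm). simpl. intros h Hh Hh'.
  rewrite (Hfg x), (Hfg (x + h)).
  - apply Hd'; auto. apply Rlt_le_trans with (1 := Hh'), Rmin_r.
  - replace (x + h - x) with h by ring. apply Rlt_le_trans with (1 := Hh'), Rmin_l.
  - replace (x - x) with 0 by ring. rewrite Rabs_R0; lra.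
Qed.

Definition RI_cont (f : R -> R) (Hc : forall x, continuity_pt f x) (a b : R)
  : Riemann_integrable f a b :=
  match Rle_dec a b with
  | left h => continuity_implies_RiemannInt h (fun x _ => Hc x)
  | right h => RiemannInt_P1 (continuity_implies_RiemannInt
                 (Rlt_le _ _ (Rnot_le_lt _ _ h)) (fun x _ => Hc x))
  end.

Lemma gauss_int_eq u (pr : Riemann_integrable gauss 0 u) : gauss_int u = RiemannInt pr.
Proof.
  unfold gauss_int. destruct (Rle_dec 0 u).
  - apply RiemannInt_P5.
  - rewrite (RiemannInt_P8 pr (continuity_implies_RiemannInt (Rlt_le u 0 (Rnot_le_lt 0 u n))
      (fun x _ => gauss_cont x))). reflexivity.
Qed.

Lemma deriv_int (f : R -> R) (Hc : forall x, continuity_pt f x) c x :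
  derivable_pt_lim (fun s => RiemannInt (RI_cont f Hc c s)) x (f x).
Proof.
  assert (h : x - 1 <= x + 1) by lra.
  apply dpl_local with (d := 1)
    (g := fun s => RiemannInt (RI_cont f Hc c (x-1)) +
                   primitive h (FTC_P1 h (fun y _ => Hc y)) s).
  - lra.
  - intros s Hs. unfold primitive. apply Rabs_def2 in Hs.
    destruct (Rle_dec (x-1) s); [|lra]. destruct (Rle_dec s (x+1)); [|lra].
    symmetry. apply RiemannInt_P26.
  - apply dpl_eq with (0 + f x); [ring|]. apply derivable_pt_lim_plus.
    + apply derivable_pt_lim_const.
    + apply RiemannInt_P27. lra.
Qed.

Lemma gauss_int_RI u : gauss_int u = RiemannInt (RI_cont gauss gauss_cont 0 u).
Proof. apply gauss_int_eq. Qed.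

Lemma deriv_gauss_int x : derivable_pt_lim gauss_int x (gauss x).
Proof.
  apply dpl_ext with (g := fun s => RiemannInt (RI_cont gauss gauss_cont 0 s)).
  - apply gauss_int_RI.
  - apply deriv_int.
Qed.

Lemma FTC_gen (f g : R -> R) a b (pr : Riemann_integrable f a b) :
  a <= b -> (forall x, a <= x <= b -> continuity_pt f x) ->
  (forall x, a <= x <= b -> derivable_pt_lim g x (f x)) ->
  RiemannInt pr = g b - g a.
Proof.
  intros Hab Hc Hd.
  assert (A1 : antiderivative f g a b).
  { split; auto. intros x Hx. exists (exist _ (f x) (Hd x Hx)).
    symmetry. apply derive_pt_eq_0. apply Hd; auto. }
  assert (A2 := RiemannInt_P29 Hab Hc).
  destruct (antiderivative_Ucte _ _ _ _ _ A1 A2) as [c Hcst].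
  rewrite (RiemannInt_P20 Hab (FTC_P1 Hab Hc) pr).
  rewrite (Hcst b), (Hcst a); lra.
Qed.

Lemma D_plus f g x a b : derivable_pt_lim f x a -> derivable_pt_lim g x b ->
  derivable_pt_lim (fun s => f s + g s) x (a + b).
Proof. intros; exact (derivable_pt_lim_plus _ _ _ _ _ H H0). Qed.
Lemma D_minus f g x a b : derivable_pt_lim f x a -> derivable_pt_lim g x b ->
  derivable_pt_lim (fun s => f s - g s) x (a - b).
Proof. intros; exact (derivable_pt_lim_minus _ _ _ _ _ H H0). Qed.
Lemma D_mult f g x a b : derivable_pt_lim f x a -> derivable_pt_lim g x b ->
  derivable_pt_lim (fun s => f s * g s) x (a * g x + f x * b).
Proof. intros; exact (derivable_pt_lim_mult _ _ _ _ _ H H0). Qed.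
Lemma D_const c x : derivable_pt_lim (fun _ => c) x 0.
Proof. apply derivable_pt_lim_const. Qed.
Lemma D_id x : derivable_pt_lim (fun s => s) x 1.
Proof. apply derivable_pt_lim_id. Qed.
Lemma D_comp f g x a b : derivable_pt_lim f x a -> derivable_pt_lim g (f x) b ->
  derivable_pt_lim (fun s => g (f s)) x (b * a).
Proof. intros; exact (derivable_pt_lim_comp _ _ _ _ _ H H0). Qed.
Lemma D_exp f x a : derivable_pt_lim f x a ->
  derivable_pt_lim (fun s => exp (f s)) x (exp (f x) * a).
Proof. intros; apply (D_comp f exp); auto; apply derivable_pt_lim_exp. Qed.
Lemma D_sq f x a : derivable_pt_lim f x a ->
  derivable_pt_lim (fun s => f s ^ 2) x (2 * f x * a).
Proof. intros. eapply dpl_eq; [|apply (D_comp f (fun y => y ^ 2)); [eassumption|apply derivable_pt_lim_pow]].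
  simpl. ring. Qed.

Lemma between_abs a b c : Rmin a b <= c <= Rmax a b -> Rabs (c - a) <= Rabs (b - a).
Proof.
  unfold Rmin, Rmax; destruct (Rle_dec a b); intros [H1 H2];
  unfold Rabs; repeat destruct Rcase_abs; lra.
Qed.

Lemma taylor2 (p p1 p2 : R -> R) t d M :
  (forall s, derivable_pt_lim p s (p1 s)) ->
  (forall s, derivable_pt_lim p1 s (p2 s)) ->
  (forall s, Rabs (s - t) <= Rabs d -> Rabs (p2 s) <= M) ->
  Rabs (p (t + d) - p t - d * p1 t) <= M * d ^ 2.
Proof.
  intros H1 H2 HM.
  destruct (MVT_abs (fun s => p s - s * p1 t) (fun s => p1 s - p1 t) t (t + d)) as [c [Hc Hcb]].
  { intros c _. apply dpl_eq with (p1 c - 1 * p1 t); [ring|].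
    apply D_minus; auto. apply derivable_pt_lim_scal_right, D_id. }
  apply between_abs in Hcb. replace (t + d - t) with d in Hcb by ring.
  destruct (MVT_abs p1 p2 t c) as [c' [Hc' Hcb']].
  { intros; auto. }
  apply between_abs in Hcb'.
  replace (p (t + d) - p t - d * p1 t) with (p (t + d) - (t + d) * p1 t - (p t - t * p1 t)) by ring.
  rewrite Hc. replace (t + d - t) with d by ring. rewrite Hc'.
  assert (HM' : Rabs (p2 c') <= M) by (apply HM; lra).
  assert (0 <= M) by (pose proof (Rabs_pos (p2 c')); lra).
  rewrite <- (pow2_abs d).
  assert (Rabs (p2 c') * Rabs (c - t) <= M * Rabs d).
  { apply Rmult_le_compat; auto using Rabs_pos; lra. }
  simpl. rewrite Rmult_1_r, <- Rmult_assoc.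
  apply Rmult_le_compat_r; auto using Rabs_pos.
Qed.

Lemma exp_le x y : x <= y -> exp x <= exp y.
Proof. intros [H|H]; [left; apply exp_increasing; auto | subst; lra]. Qed.

Definition hh t x := exp (-(t^2*(1+x^2))) / (1+x^2).
Definition hht t x := -2*t*exp(-(t^2*(1+x^2))).
Definition hhtt t x := (-2 + 4*t^2*(1+x^2)) * exp(-(t^2*(1+x^2))).

Lemma pos1x2 x : 0 < 1 + x^2.
Proof. pose proof (pow2_ge_0 x); lra. Qed.

Lemma hh_cont t x : continuity_pt (hh t) x.
Proof.
  apply derivable_continuous_pt. unfold hh. reg. pose proof (pos1x2 x). lra.
Qed.
Lemma hht_cont t x : continuity_pt (hht t) x.
Proof. apply derivable_continuous_pt. unfold hht. reg. Qed.

Lemma hh_d1 x s : derivable_pt_lim (fun t => hh t x) s (hht s x).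
Proof.
  unfold hh, hht. pose proof (pos1x2 x).
  eapply dpl_eq.
  2:{ apply derivable_pt_lim_div_scal. apply D_exp.
  apply (D_comp (fun t => t^2 * (1+x^2)) (fun y => - y)).
  - apply D_mult. apply D_sq, D_id. apply D_const.
  - apply (derivable_pt_lim_opp (fun y => y)), D_id. }
  cbv beta. field. lra.
Qed.

Lemma hh_d2 x s : derivable_pt_lim (fun t => hht t x) s (hhtt s x).
Proof.
  unfold hht, hhtt.
  eapply dpl_eq.
  2:{ apply D_mult.
  - apply (derivable_pt_lim_scal (fun y => y)), D_id.
  - apply D_exp.
    apply (D_comp (fun t => t^2 * (1+x^2)) (fun y => - y)).
    + apply D_mult. apply D_sq, D_id. apply D_const.
    + apply (derivable_pt_lim_opp (fun y => y)), D_id. }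
  cbv beta. ring.
Qed.

Definition HH t := RiemannInt (RI_cont (hh t) (hh_cont t) 0 1).
Definition HI t := RiemannInt (RI_cont (hht t) (hht_cont t) 0 1).

Lemma hhtt_bound t x s : 0 <= x <= 1 -> Rabs (s - t) <= 1 ->
  Rabs (hhtt s x) <= 2 + 8 * (Rabs t + 1)^2.
Proof.
  intros Hx Hs. unfold hhtt. rewrite Rabs_mult.
  assert (He : 0 < exp (-(s^2*(1+x^2))) <= 1).
  { split. apply exp_pos. rewrite <- exp_0 at 2. apply exp_le.
    pose proof (pow2_ge_0 s); pose proof (pow2_ge_0 x).
    assert (0 <= s^2 * (1+x^2)) by (apply Rmult_le_pos; lra). lra. }
  rewrite (Rabs_right (exp _)) by lra.
  assert (Hx2 : x^2 <= 1) by (simpl; nra).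
  assert (Hs2 : s^2 <= (Rabs t + 1)^2).
  { rewrite <- (pow2_abs s). apply pow_incr. split. apply Rabs_pos.
    pose proof (Rabs_triang_inv s t). lra. }
  assert (Hb : Rabs (-2 + 4*s^2*(1+x^2)) <= 2 + 8 * (Rabs t + 1)^2).
  { pose proof (pow2_ge_0 s); pose proof (pow2_ge_0 x).
    assert (0 <= s^2 * x^2) by (apply Rmult_le_pos; lra).
    assert (s^2 * x^2 <= s^2) by nra.
    set (T := (Rabs t + 1)^2) in *. pose proof (pow2_ge_0 (Rabs t + 1)). fold T in H3.
    apply Rabs_le; split; nra. }
  assert (0 <= Rabs (-2 + 4*s^2*(1+x^2))) by apply Rabs_pos.
  nra.
Qed.

Lemma HH_key t h : Rabs h <= 1 ->
  Rabs (HH (t + h) - HH t - h * HI t) <= (2 + 8 * (Rabs t + 1)^2) * h^2.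
Proof.
  intros Hh. set (M := 2 + 8 * (Rabs t + 1)^2).
  set (pr1 := RI_cont (hh (t+h)) (hh_cont (t+h)) 0 1).
  set (pr2 := RI_cont (hh t) (hh_cont t) 0 1).
  set (pr3 := RI_cont (hht t) (hht_cont t) 0 1).
  set (pr12 := RiemannInt_P10 (-1) pr1 pr2).
  set (pr123 := RiemannInt_P10 (-h) pr12 pr3).
  assert (E : RiemannInt pr123 = HH (t + h) - HH t - h * HI t).
  { rewrite (RiemannInt_P13 pr12 pr3 pr123).
    rewrite (RiemannInt_P13 pr1 pr2 pr12).
    unfold HH, HI, pr1, pr2, pr3. ring. }
  rewrite <- E.
  eapply Rle_trans. apply (RiemannInt_P17 pr123 (RiemannInt_P16 pr123)). lra.
  eapply Rle_trans.
  apply (RiemannInt_P19 (RiemannInt_P16 pr123) (RiemannInt_P14 0 1 (M * h^2))). lra.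
  - intros x Hx. unfold fct_cte.
    assert (T := taylor2 (fun s => hh s x) (fun s => hht s x) (fun s => hhtt s x) t h M).
    cbv beta in T |- *.
    replace (hh (t + h) x + -1 * hh t x + - h * hht t x)
      with (hh (t + h) x - hh t x - h * hht t x) by ring.
    apply T.
    + intros; apply hh_d1.
    + intros; apply hh_d2.
    + intros s Hs. apply hhtt_bound; lra.
  - rewrite RiemannInt_P15. lra.
Qed.

Lemma HH_deriv t : derivable_pt_lim HH t (HI t).
Proof.
  intros eps Heps. set (M := 2 + 8 * (Rabs t + 1)^2).
  assert (HM : 0 < M) by (unfold M; pose proof (pow2_ge_0 (Rabs t + 1)); lra).
  assert (Hd : 0 < Rmin 1 (eps / (2 * M))).
  { apply Rmin_pos. lra. apply Rdiv_lt_0_compat; lra. }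
  exists (mkposreal _ Hd). simpl. intros h Hh0 Hh.
  assert (H1 : Rabs h <= 1) by (pose proof (Rmin_l 1 (eps/(2*M))); lra).
  assert (H2 : Rabs h < eps / (2 * M)) by (pose proof (Rmin_r 1 (eps/(2*M))); lra).
  pose proof (HH_key t h H1) as K. fold M in K.
  replace ((HH (t + h) - HH t) / h - HI t) with ((HH (t + h) - HH t - h * HI t) / h)
    by (field; auto).
  unfold Rdiv. rewrite Rabs_mult, Rabs_inv.
  assert (Ha : 0 < Rabs h) by (apply Rabs_pos_lt; auto).
  apply Rle_lt_trans with (M * h^2 * / Rabs h).
  { apply Rmult_le_compat_r; auto. left; apply Rinv_0_lt_compat; auto. }
  rewrite <- (pow2_abs h). replace (M * Rabs h ^ 2 * / Rabs h) with (M * Rabs h) by (field; lra).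
  apply Rlt_le_trans with (M * (eps / (2 * M))).
  apply Rmult_lt_compat_l; auto.
  replace (M * (eps / (2 * M))) with (eps / 2) by (field; lra). lra.
Qed.

Lemma gauss_int_0 : gauss_int 0 = 0.
Proof. rewrite gauss_int_RI. apply RiemannInt_P9. Qed.

Lemma D_gauss_int_lin t x : derivable_pt_lim (fun y => gauss_int (t * y)) x (gauss (t * x) * t).
Proof.
  apply (D_comp (fun y => t * y) gauss_int).
  - apply dpl_eq with (t * 1); [ring|]. apply (derivable_pt_lim_scal (fun y => y)), D_id.
  - apply deriv_gauss_int.
Qed.

Lemma HI_eq t : HI t = -2 * gauss t * gauss_int t.
Proof.
  unfold HI. rewrite (FTC_gen (hht t) (fun y => -2 * gauss t * gauss_int (t * y))).
  - rewrite Rmult_1_r, Rmult_0_r, gauss_int_0. ring.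
  - lra.
  - intros; apply hht_cont.
  - intros x _. eapply dpl_eq.
    2:{ apply (derivable_pt_lim_scal (fun y => gauss_int (t * y))). apply D_gauss_int_lin. }
    unfold hht, gauss.
    replace (exp (-(t^2*(1+x^2)))) with (exp (-t^2) * exp (-(t*x)^2))
      by (rewrite <- exp_plus; f_equal; ring). ring.
Qed.

Lemma HH_0 : HH 0 = PI / 4.
Proof.
  unfold HH. rewrite (FTC_gen (hh 0) atan).
  - rewrite atan_1, atan_0. ring.
  - lra.
  - intros; apply hh_cont.
  - intros x _. eapply dpl_eq; [|apply derivable_pt_lim_atan].
    unfold hh. replace (-(0^2*(1+x^2))) with 0 by ring. rewrite exp_0. field.
    pose proof (pos1x2 x); lra.
Qed.

Definition FF t := gauss_int t ^ 2 + HH t.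

Lemma FF_deriv t : derivable_pt_lim FF t 0.
Proof.
  eapply dpl_eq.
  2:{ apply D_plus. apply D_sq, deriv_gauss_int. apply HH_deriv. }
  rewrite HI_eq. ring.
Qed.

Lemma FF_const t : FF t = PI / 4.
Proof.
  destruct (MVT_abs FF (fun _ => 0) 0 t) as [c [Hc _]].
  { intros; apply FF_deriv. }
  rewrite Rabs_R0, Rmult_0_l in Hc.
  assert (FF 0 = PI / 4) by (unfold FF; rewrite gauss_int_0, HH_0; ring).
  revert Hc. unfold Rabs; destruct Rcase_abs; lra.
Qed.

Lemma HH_bounds t : 0 <= HH t <= exp (- t^2).
Proof.
  unfold HH.
  destruct (@RiemannInt_const_bound (hh t) 0 1 0 (exp (- t^2))
      (RI_cont (hh t) (hh_cont t) 0 1)) as [A B].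
  - lra.
  - intros x Hx. unfold hh. pose proof (pos1x2 x) as P.
    set (i := / (1 + x^2)).
    assert (Hi : (1 + x^2) * i = 1) by (apply Rinv_r; lra).
    assert (Hi0 : 0 < i) by (apply Rinv_0_lt_compat; lra).
    assert (He0 : 0 < exp (-(t^2*(1+x^2)))) by apply exp_pos.
    assert (He : exp (-(t^2*(1+x^2))) <= exp (- t^2)).
    { apply exp_le. pose proof (pow2_ge_0 t); pose proof (pow2_ge_0 x). nra. }
    unfold Rdiv; fold i. split. nra.
    assert (i <= 1) by nra. nra.
  - lra.
Qed.

Lemma gauss_int_nonneg u : 0 <= u -> 0 <= gauss_int u.
Proof.
  intros Hu. rewrite gauss_int_RI.
  destruct (@RiemannInt_const_bound gauss 0 u 0 1 (RI_cont gauss gauss_cont 0 u)) as [A _].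
  - auto.
  - intros x _. unfold gauss. split. left; apply exp_pos.
    rewrite <- exp_0. apply exp_le. pose proof (pow2_ge_0 x); lra.
  - lra.
Qed.

Lemma erfc_bound u : 0 <= u -> 0 <= erfc u <= 4 / PI * exp (- u^2).
Proof.
  intros Hu. pose proof (FF_const u) as F. unfold FF in F.
  pose proof (HH_bounds u) as [H0 H1].
  pose proof (gauss_int_nonneg u Hu) as G0.
  set (G := gauss_int u) in *. set (H := HH u) in *. set (e := exp (- u^2)) in *.
  pose proof PI_RGT_0 as Hpi.
  assert (Hs : 0 < sqrt PI) by (apply sqrt_lt_R0; lra).
  assert (Hs2 : sqrt PI * sqrt PI = PI) by (apply sqrt_sqrt; lra).
  set (s := sqrt PI) in *.
  assert (K : 2 * G <= s).
  { destruct (Rle_lt_dec (2 * G) s); auto. simpl in F. nra. }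
  unfold erfc, erf. fold G s.
  replace (1 - 2 / s * G) with ((s - 2 * G) / s) by (field; lra).
  split.
  - unfold Rdiv; apply Rmult_le_pos; [lra | left; apply Rinv_0_lt_compat; lra].
  - replace (4 / PI * e) with ((4 * e / s) / s) by (rewrite <- Hs2; field; lra).
    apply Rmult_le_compat_r. left; apply Rinv_0_lt_compat; lra.
    apply Rmult_le_reg_r with s; auto. unfold Rdiv. rewrite Rmult_assoc, Rinv_l by lra.
    simpl in F. nra.
Qed.

Lemma erfc_0 : erfc 0 = 1.
Proof. unfold erfc, erf. rewrite gauss_int_0. ring. Qed.

Definition e1 u := -(2 / sqrt PI) * exp (- u^2).
Definition e2 u := (4 / sqrt PI) * u * exp (- u^2).

Lemma D_erfc u : derivable_pt_lim erfc u (e1 u).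
Proof.
  unfold erfc, erf, e1. eapply dpl_eq.
  2:{ apply (D_minus (fun _ => 1) (fun s => 2 / sqrt PI * gauss_int s)).
      apply D_const. apply (derivable_pt_lim_scal gauss_int). apply deriv_gauss_int. }
  unfold gauss. cbv beta. unfold Rdiv. ring.
Qed.

Lemma D_e1 u : derivable_pt_lim e1 u (e2 u).
Proof.
  unfold e1, e2. eapply dpl_eq.
  2:{ apply (derivable_pt_lim_scal (fun s => exp (- s^2))). apply D_exp.
      apply (D_comp (fun s => s^2) (fun y => - y)). apply D_sq, D_id.
      apply (derivable_pt_lim_opp (fun y => y)), D_id. }
  cbv beta. unfold Rdiv. ring.
Qed.

Lemma D_erfc_c f x a : derivable_pt_lim f x a ->
  derivable_pt_lim (fun s => erfc (f s)) x (e1 (f x) * a).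
Proof. intros. apply (D_comp f erfc); auto. apply D_erfc. Qed.
Lemma D_e1_c f x a : derivable_pt_lim f x a ->
  derivable_pt_lim (fun s => e1 (f s)) x (e2 (f x) * a).
Proof. intros. apply (D_comp f e1); auto. apply D_e1. Qed.

Lemma core0 U V pu pv s0 : derivable_pt_lim U s0 pu -> derivable_pt_lim V s0 pv ->
  derivable_pt_lim (fun s => erfc (U s) * erfc (V s)) s0
    (pu * e1 (U s0) * erfc (V s0) + pv * erfc (U s0) * e1 (V s0)).
Proof.
  intros HU HV. eapply dpl_eq.
  2:{ apply D_mult; apply D_erfc_c; eauto. }
  cbv beta; unfold Rdiv; ring.
Qed.

Lemma core1 U V pu pv al be l s0 : derivable_pt_lim U s0 pu -> derivable_pt_lim V s0 pv ->
  derivable_pt_lim (fun s => (al * e1 (U s) * erfc (V s) + be * erfc (U s) * e1 (V s)) / l) s0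
    ((al * pu * e2 (U s0) * erfc (V s0) + (al * pv + be * pu) * e1 (U s0) * e1 (V s0)
      + be * pv * erfc (U s0) * e2 (V s0)) / l).
Proof.
  intros HU HV. eapply dpl_eq.
  2:{ apply derivable_pt_lim_div_scal. apply D_plus.
      - apply (D_mult (fun s => al * e1 (U s))). 
        apply (derivable_pt_lim_scal (fun s => e1 (U s))). apply D_e1_c; eauto.
        apply D_erfc_c; eauto.
      - apply (D_mult (fun s => be * erfc (U s))).
        apply (derivable_pt_lim_scal (fun s => erfc (U s))). apply D_erfc_c; eauto.
        apply D_e1_c; eauto. }
  cbv beta; unfold Rdiv; ring.
Qed.

Definition P D a1 a2 a3 b1 b2 b3 x y z t :=
  erfc ((a1*x+a2*y+a3*z)/ell0 D t) * erfc ((b1*x+b2*y+b3*z)/ell0 D t).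
Definition Q1 D a1 a2 a3 b1 b2 b3 c1 c2 c3 x y z t :=
  ((c1*a1+c2*a2+c3*a3) * e1 ((a1*x+a2*y+a3*z)/ell0 D t) * erfc ((b1*x+b2*y+b3*z)/ell0 D t)
   + (c1*b1+c2*b2+c3*b3) * erfc ((a1*x+a2*y+a3*z)/ell0 D t) * e1 ((b1*x+b2*y+b3*z)/ell0 D t))
  / ell0 D t.
Definition Q2 D a1 a2 a3 b1 b2 b3 c1 c2 c3 d1 d2 d3 x y z t :=
  ((c1*a1+c2*a2+c3*a3) * (d1*a1+d2*a2+d3*a3) * e2 ((a1*x+a2*y+a3*z)/ell0 D t) * erfc ((b1*x+b2*y+b3*z)/ell0 D t)
   + ((c1*a1+c2*a2+c3*a3) * (d1*b1+d2*b2+d3*b3) + (c1*b1+c2*b2+c3*b3) * (d1*a1+d2*a2+d3*a3))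
      * e1 ((a1*x+a2*y+a3*z)/ell0 D t) * e1 ((b1*x+b2*y+b3*z)/ell0 D t)
   + (c1*b1+c2*b2+c3*b3) * (d1*b1+d2*b2+d3*b3) * erfc ((a1*x+a2*y+a3*z)/ell0 D t) * e2 ((b1*x+b2*y+b3*z)/ell0 D t))
  / ell0 D t / ell0 D t.
Definition Qt D a1 a2 a3 b1 b2 b3 x y z t :=
  (-4 * D * ((a1*x+a2*y+a3*z)/ell0 D t) / ell0 D t / ell0 D t) * e1 ((a1*x+a2*y+a3*z)/ell0 D t) * erfc ((b1*x+b2*y+b3*z)/ell0 D t)
  + (-4 * D * ((b1*x+b2*y+b3*z)/ell0 D t) / ell0 D t / ell0 D t) * erfc ((a1*x+a2*y+a3*z)/ell0 D t) * e1 ((b1*x+b2*y+b3*z)/ell0 D t).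

Ltac lin := eapply dpl_eq; [| apply derivable_pt_lim_div_scal;
   repeat (apply D_plus || apply D_mult || apply D_id || apply D_const)];
   cbv beta; unfold Rdiv; ring.

Lemma P_x D a1 a2 a3 b1 b2 b3 x y z t :
  derivable_pt_lim (fun u => P D a1 a2 a3 b1 b2 b3 u y z t) x (Q1 D a1 a2 a3 b1 b2 b3 1 0 0 x y z t).
Proof.
  unfold P, Q1. eapply dpl_eq.
  2:{ apply (core0 (fun u => (a1*u+a2*y+a3*z)/ell0 D t) (fun u => (b1*u+b2*y+b3*z)/ell0 D t) (a1/ell0 D t) (b1/ell0 D t)); lin. }
  cbv beta; unfold Rdiv; ring.
Qed.
Lemma P_y D a1 a2 a3 b1 b2 b3 x y z t :
  derivable_pt_lim (fun u => P D a1 a2 a3 b1 b2 b3 x u z t) y (Q1 D a1 a2 a3 b1 b2 b3 0 1 0 x y z t).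
Proof.
  unfold P, Q1. eapply dpl_eq.
  2:{ apply (core0 (fun u => (a1*x+a2*u+a3*z)/ell0 D t) (fun u => (b1*x+b2*u+b3*z)/ell0 D t) (a2/ell0 D t) (b2/ell0 D t)); lin. }
  cbv beta; unfold Rdiv; ring.
Qed.
Lemma P_z D a1 a2 a3 b1 b2 b3 x y z t :
  derivable_pt_lim (fun u => P D a1 a2 a3 b1 b2 b3 x y u t) z (Q1 D a1 a2 a3 b1 b2 b3 0 0 1 x y z t).
Proof.
  unfold P, Q1. eapply dpl_eq.
  2:{ apply (core0 (fun u => (a1*x+a2*y+a3*u)/ell0 D t) (fun u => (b1*x+b2*y+b3*u)/ell0 D t) (a3/ell0 D t) (b3/ell0 D t)); lin. }
  cbv beta; unfold Rdiv; ring.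
Qed.

Lemma Q1_x D a1 a2 a3 b1 b2 b3 c1 c2 c3 x y z t :
  derivable_pt_lim (fun u => Q1 D a1 a2 a3 b1 b2 b3 c1 c2 c3 u y z t) x
     (Q2 D a1 a2 a3 b1 b2 b3 c1 c2 c3 1 0 0 x y z t).
Proof.
  unfold Q1, Q2. eapply dpl_eq.
  2:{ apply (core1 (fun u => (a1*u+a2*y+a3*z)/ell0 D t) (fun u => (b1*u+b2*y+b3*z)/ell0 D t) (a1/ell0 D t) (b1/ell0 D t)); lin. }
  cbv beta; unfold Rdiv; ring.
Qed.
Lemma Q1_y D a1 a2 a3 b1 b2 b3 c1 c2 c3 x y z t :
  derivable_pt_lim (fun u => Q1 D a1 a2 a3 b1 b2 b3 c1 c2 c3 x u z t) y
     (Q2 D a1 a2 a3 b1 b2 b3 c1 c2 c3 0 1 0 x y z t).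
Proof.
  unfold Q1, Q2. eapply dpl_eq.
  2:{ apply (core1 (fun u => (a1*x+a2*u+a3*z)/ell0 D t) (fun u => (b1*x+b2*u+b3*z)/ell0 D t) (a2/ell0 D t) (b2/ell0 D t)); lin. }
  cbv beta; unfold Rdiv; ring.
Qed.
Lemma Q1_z D a1 a2 a3 b1 b2 b3 c1 c2 c3 x y z t :
  derivable_pt_lim (fun u => Q1 D a1 a2 a3 b1 b2 b3 c1 c2 c3 x y u t) z
     (Q2 D a1 a2 a3 b1 b2 b3 c1 c2 c3 0 0 1 x y z t).
Proof.
  unfold Q1, Q2. eapply dpl_eq.
  2:{ apply (core1 (fun u => (a1*x+a2*y+a3*u)/ell0 D t) (fun u => (b1*x+b2*y+b3*u)/ell0 D t) (a3/ell0 D t) (b3/ell0 D t)); lin. }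
  cbv beta; unfold Rdiv; ring.
Qed.

Lemma ell0_pos D t : 0 < D -> 0 < t -> 0 < ell0 D t.
Proof. intros. unfold ell0. apply sqrt_lt_R0. nra. Qed.

Lemma D_over_ell D A t : 0 < D -> 0 < t ->
  derivable_pt_lim (fun u => A / ell0 D u) t (-4 * D * (A / ell0 D t) / ell0 D t / ell0 D t).
Proof.
  intros HD Ht. pose proof (ell0_pos D t HD Ht) as Hl.
  assert (H8 : 0 < 8 * D * t) by nra.
  eapply dpl_eq.
  2:{ apply (derivable_pt_lim_div (fun _ => A) (fun u => sqrt (8 * D * u))).
      - apply D_const.
      - apply (D_comp (fun u => 8 * D * u) sqrt).
        + repeat (apply D_mult || apply D_id || apply D_const).
        + apply derivable_pt_lim_sqrt; auto.
      - fold (ell0 D t). lra. }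
  fold (ell0 D t). unfold Rsqr. field. lra.
Qed.

Lemma P_t D a1 a2 a3 b1 b2 b3 x y z t : 0 < D -> 0 < t ->
  derivable_pt_lim (fun u => P D a1 a2 a3 b1 b2 b3 x y z u) t (Qt D a1 a2 a3 b1 b2 b3 x y z t).
Proof.
  intros HD Ht. unfold P, Qt. eapply dpl_eq.
  2:{ apply (core0 (fun u => (a1*x+a2*y+a3*z)/ell0 D u) (fun u => (b1*x+b2*y+b3*z)/ell0 D u));
      apply D_over_ell; auto. }
  cbv beta; unfold Rdiv; ring.
Qed.

Definition EX D c1 c2 c3 x y z t :=
  Q1 D 1 0 0 0 1 0 c1 c2 c3 x y z t + Q1 D 0 0 1 1 1 1 c1 c2 c3 x y z t
  - Q1 D 1 0 1 0 1 1 c1 c2 c3 x y z t.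
Definition EXX D c1 c2 c3 d1 d2 d3 x y z t :=
  Q2 D 1 0 0 0 1 0 c1 c2 c3 d1 d2 d3 x y z t + Q2 D 0 0 1 1 1 1 c1 c2 c3 d1 d2 d3 x y z t
  - Q2 D 1 0 1 0 1 1 c1 c2 c3 d1 d2 d3 x y z t.
Definition ET D x y z t :=
  Qt D 1 0 0 0 1 0 x y z t + Qt D 0 0 1 1 1 1 x y z t - Qt D 1 0 1 0 1 1 x y z t.

Lemma E0_P D x y z t : E0 D x y z t =
  P D 1 0 0 0 1 0 x y z t + P D 0 0 1 1 1 1 x y z t - P D 1 0 1 0 1 1 x y z t.
Proof. unfold E0, P. repeat f_equal; ring. Qed.

Lemma PDE_part (D : R) (hD : 0 < D) :
  (exists Ex Ey Ez Et Exx Eyy Ezz Exz Eyz : R -> R -> R -> R -> R,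
     forall x y z t, 0 < t ->
       derivable_pt_lim (fun u => E0 D u y z t) x (Ex x y z t) /\
       derivable_pt_lim (fun u => E0 D x u z t) y (Ey x y z t) /\
       derivable_pt_lim (fun u => E0 D x y u t) z (Ez x y z t) /\
       derivable_pt_lim (fun u => E0 D x y z u) t (Et x y z t) /\
       derivable_pt_lim (fun u => Ex u y z t) x (Exx x y z t) /\
       derivable_pt_lim (fun u => Ey x u z t) y (Eyy x y z t) /\
       derivable_pt_lim (fun u => Ez x y u t) z (Ezz x y z t) /\
       derivable_pt_lim (fun u => Ex x y u t) z (Exz x y z t) /\
       derivable_pt_lim (fun u => Ey x y u t) z (Eyz x y z t) /\
       Et x y z t = 2 * D * (Exx x y z t + Eyy x y z t + Ezz x y z t
                             - Exz x y z t - Eyz x y z t)).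
Proof.
  exists (EX D 1 0 0), (EX D 0 1 0), (EX D 0 0 1), (ET D),
    (EXX D 1 0 0 1 0 0), (EXX D 0 1 0 0 1 0), (EXX D 0 0 1 0 0 1),
    (EXX D 1 0 0 0 0 1), (EXX D 0 1 0 0 0 1).
  intros x y z t Ht.
  split; [|split; [|split; [|split; [|split; [|split; [|split; [|split; [|split]]]]]]]].
  - eapply dpl_ext. intros; apply E0_P. unfold EX.
    apply D_minus; [apply D_plus|]; apply P_x.
  - eapply dpl_ext. intros; apply E0_P. unfold EX.
    apply D_minus; [apply D_plus|]; apply P_y.
  - eapply dpl_ext. intros; apply E0_P. unfold EX.
    apply D_minus; [apply D_plus|]; apply P_z.
  - eapply dpl_ext. intros; apply E0_P. unfold ET.
    apply D_minus; [apply D_plus|]; apply P_t; auto.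
  - unfold EX, EXX. apply D_minus; [apply D_plus|]; apply Q1_x.
  - unfold EX, EXX. apply D_minus; [apply D_plus|]; apply Q1_y.
  - unfold EX, EXX. apply D_minus; [apply D_plus|]; apply Q1_z.
  - unfold EX, EXX. apply D_minus; [apply D_plus|]; apply Q1_z.
  - unfold EX, EXX. apply D_minus; [apply D_plus|]; apply Q1_z.
  - unfold ET, EXX, Qt, Q2, e1, e2. unfold Rdiv. ring.
Qed.

Lemma exp_neg_sq u : exp (- u^2) * (1 + u^2) <= 1.
Proof.
  pose proof (exp_ineq1_le (u^2)).
  assert (E : exp (- u^2) * exp (u^2) = 1) by (rewrite <- exp_plus; replace (- u^2 + u^2) with 0 by ring; apply exp_0).
  pose proof (exp_pos (- u^2)). nra.
Qed.

Lemma erfc_b u : 0 <= u -> 0 <= erfc u /\ erfc u <= 2 /\ erfc u * (1 + u^2) <= 2.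
Proof.
  intros Hu. destruct (erfc_bound u Hu) as [A B].
  pose proof (exp_neg_sq u). pose proof (exp_pos (- u^2)).
  pose proof PI2_1.
  assert (Hc : 4 / PI <= 2).
  { apply Rmult_le_reg_r with PI. lra. unfold Rdiv. rewrite Rmult_assoc, Rinv_l by lra. lra. }
  assert (0 < 4 / PI) by (unfold Rdiv; apply Rmult_lt_0_compat; [lra| apply Rinv_0_lt_compat; lra]).
  pose proof (pow2_ge_0 u).
  split; [auto|split]; nra.
Qed.

Lemma erfc_decay a l m : 0 < l -> 0 < m -> m <= a ->
  0 <= erfc (a / l) /\ erfc (a / l) <= 2 /\ erfc (a / l) * m^2 <= 2 * l^2.
Proof.
  intros Hl Hm Ha.
  assert (Hu : 0 <= a / l) by (unfold Rdiv; apply Rmult_le_pos; [lra| left; apply Rinv_0_lt_compat; lra]).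
  destruct (erfc_b _ Hu) as [A [B C]].
  split; [auto|split; [auto|]].
  assert (Eu : (a / l)^2 * l^2 = a^2) by (field; lra).
  assert (m^2 <= a^2) by (simpl; nra).
  set (u := a / l) in *. set (e := erfc u) in *.
  pose proof (pow2_ge_0 l). pose proof (pow2_ge_0 u).
  assert (e * m^2 <= e * a^2) by nra.
  assert (e * a^2 = e * u^2 * l^2) by (rewrite <- Eu; ring).
  assert (e * u^2 <= 2) by nra.
  nra.
Qed.

Lemma prod_b ea eb m2 L : 0 <= ea <= 2 -> 0 <= eb -> eb * m2 <= 2 * L -> 0 <= m2 ->
  0 <= ea * eb /\ ea * eb * m2 <= 4 * L.
Proof. intros. assert (0 <= eb * m2) by nra.
  assert (ea * (eb * m2) <= 2 * (eb * m2)) by nra. split; nra. Qed.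

Lemma main_sym D x y z t : E0 D x y z t = E0 D y x z t.
Proof. unfold E0. replace (y + x + z) with (x + y + z) by ring. ring. Qed.

Lemma zero_div l : 0 / l = 0.
Proof. unfold Rdiv; ring. Qed.

Lemma limit_part D (hD : 0 < D) : forall x y z, 0 < x -> 0 < y -> 0 < z ->
     limit1_in (fun t => E0 D x y z t) (fun t => 0 < t) 0 0.
Proof.
  intros x y z Hx Hy Hz eps Heps.
  set (m := Rmin x (Rmin y z)).
  assert (Hm : 0 < m) by (unfold m; repeat apply Rmin_pos; auto).
  assert (mx : m <= x) by apply Rmin_l.
  assert (my : m <= y) by (unfold m; eapply Rle_trans; [apply Rmin_r|apply Rmin_l]).
  assert (mz : m <= z) by (unfold m; eapply Rle_trans; [apply Rmin_r|apply Rmin_r]).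
  exists (eps * m^2 / (64 * D)). split.
  { unfold Rdiv. apply Rmult_lt_0_compat. apply Rmult_lt_0_compat; auto. apply pow_lt; auto.
    apply Rinv_0_lt_compat; lra. }
  intros t [Ht Hd]. simpl in *. unfold R_dist in *. rewrite Rminus_0_r in *.
  rewrite Rabs_right in Hd by lra.
  pose proof (ell0_pos D t hD Ht) as Hl.
  assert (Hl2 : ell0 D t ^ 2 = 8 * D * t).
  { unfold ell0. simpl. rewrite Rmult_1_r. apply sqrt_sqrt. nra. }
  unfold E0. cbv zeta. set (l := ell0 D t) in *.
  destruct (erfc_decay x l m Hl Hm mx) as [a1 [a2 a3]].
  destruct (erfc_decay y l m Hl Hm my) as [b1 [b2 b3]].
  destruct (erfc_decay z l m Hl Hm mz) as [c1 [c2 c3]].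
  destruct (erfc_decay (x+y+z) l m Hl Hm ltac:(lra)) as [d1 [d2 d3]].
  destruct (erfc_decay (x+z) l m Hl Hm ltac:(lra)) as [f1 [f2 f3]].
  destruct (erfc_decay (y+z) l m Hl Hm ltac:(lra)) as [g1 [g2 g3]].
  assert (Hm2 : 0 < m^2) by (apply pow_lt; auto).
  destruct (prod_b _ _ (m^2) (l^2) (conj a1 a2) b1 b3 ltac:(lra)) as [P1 P1'].
  destruct (prod_b _ _ (m^2) (l^2) (conj c1 c2) d1 d3 ltac:(lra)) as [P2 P2'].
  destruct (prod_b _ _ (m^2) (l^2) (conj f1 f2) g1 g3 ltac:(lra)) as [P3 P3'].
  set (p1 := erfc (x / l) * erfc (y / l)) in *.
  set (p2 := erfc (z / l) * erfc ((x + y + z) / l)) in *.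
  set (p3 := erfc ((x + z) / l) * erfc ((y + z) / l)) in *.
  assert (Hb : Rabs (p1 + p2 - p3) * m^2 <= 8 * l^2).
  { unfold Rabs; destruct Rcase_abs; nra. }
  assert (Ht2 : 64 * D * t < eps * m^2).
  { apply Rmult_lt_compat_l with (r := 64 * D) in Hd; [|lra].
    replace (64 * D * (eps * (m * (m * 1)) / (64 * D))) with (eps * m^2) in Hd by (simpl; field; lra). lra. }
  apply Rmult_lt_reg_r with (m^2); auto. lra.
Qed.

Lemma decouple_part D (hD : 0 < D) : forall x y t, 0 < t ->
     forall eps, 0 < eps -> exists M, forall z, M < z ->
       Rabs (E0 D x y z t - erfc (x / ell0 D t) * erfc (y / ell0 D t)) < eps.
Proof.
  intros x y t Ht eps Heps.
  pose proof (ell0_pos D t hD Ht) as Hl. set (l := ell0 D t) in *.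
  exists (Rabs x + Rabs y + 4 * l^2 / eps + 1). intros z Hz.
  set (w := z - Rabs x - Rabs y).
  assert (HK : 0 <= 4 * l^2 / eps).
  { unfold Rdiv. apply Rmult_le_pos. pose proof (pow2_ge_0 l); lra. left; apply Rinv_0_lt_compat; auto. }
  assert (Hw : 4 * l^2 / eps + 1 < w) by (unfold w; lra).
  assert (Hw0 : 0 < w) by lra.
  pose proof (Rabs_pos x). pose proof (Rabs_pos y).
  pose proof (Rle_abs x). pose proof (Rle_abs y).
  assert (Nx : - Rabs x <= x) by (pose proof (Rle_abs (-x)); rewrite Rabs_Ropp in *; lra).
  assert (Ny : - Rabs y <= y) by (pose proof (Rle_abs (-y)); rewrite Rabs_Ropp in *; lra).
  destruct (erfc_decay z l w Hl Hw0 ltac:(unfold w; lra)) as [c1 [c2 c3]].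
  destruct (erfc_decay (x+y+z) l w Hl Hw0 ltac:(unfold w; lra)) as [d1 [d2 d3]].
  destruct (erfc_decay (x+z) l w Hl Hw0 ltac:(unfold w; lra)) as [f1 [f2 f3]].
  destruct (erfc_decay (y+z) l w Hl Hw0 ltac:(unfold w; lra)) as [g1 [g2 g3]].
  assert (Hw2 : 0 < w^2) by (apply pow_lt; auto).
  destruct (prod_b _ _ (w^2) (l^2) (conj c1 c2) d1 d3 ltac:(lra)) as [P2 P2'].
  destruct (prod_b _ _ (w^2) (l^2) (conj f1 f2) g1 g3 ltac:(lra)) as [P3 P3'].
  replace (E0 D x y z t - erfc (x / l) * erfc (y / l)) with
    (erfc (z / l) * erfc ((x + y + z) / l) - erfc ((x + z) / l) * erfc ((y + z) / l))
    by (unfold E0; cbv zeta; fold l; ring).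
  set (p2 := erfc (z / l) * erfc ((x + y + z) / l)) in *.
  set (p3 := erfc ((x + z) / l) * erfc ((y + z) / l)) in *.
  assert (Hb : Rabs (p2 - p3) * w^2 <= 4 * l^2).
  { unfold Rabs; destruct Rcase_abs; nra. }
  assert (E1 : 4 * l^2 < eps * w).
  { apply Rmult_lt_compat_l with (r := eps) in Hw; auto.
    replace (eps * (4 * l ^ 2 / eps + 1)) with (4 * l^2 + eps) in Hw by (field; lra). lra. }
  assert (E2 : eps * w <= eps * w^2) by (simpl; nra).
  apply Rmult_lt_reg_r with (w^2); auto. lra.
Qed.

Theorem mainTheorem7 (D : R) (hD : 0 < D) :
  (* the PDE  dE/dt = 2D [Exx + Eyy + Ezz - Exz - Eyz]  for t > 0,
     with the partial derivatives given as functions characterised by derivable_pt_lim *)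
  (exists Ex Ey Ez Et Exx Eyy Ezz Exz Eyz : R -> R -> R -> R -> R,
     forall x y z t, 0 < t ->
       derivable_pt_lim (fun u => E0 D u y z t) x (Ex x y z t) /\
       derivable_pt_lim (fun u => E0 D x u z t) y (Ey x y z t) /\
       derivable_pt_lim (fun u => E0 D x y u t) z (Ez x y z t) /\
       derivable_pt_lim (fun u => E0 D x y z u) t (Et x y z t) /\
       derivable_pt_lim (fun u => Ex u y z t) x (Exx x y z t) /\
       derivable_pt_lim (fun u => Ey x u z t) y (Eyy x y z t) /\
       derivable_pt_lim (fun u => Ez x y u t) z (Ezz x y z t) /\
       derivable_pt_lim (fun u => Ex x y u t) z (Exz x y z t) /\
       derivable_pt_lim (fun u => Ey x y u t) z (Eyz x y z t) /\
       Et x y z t = 2 * D * (Exx x y z t + Eyy x y z t + Ezz x y z t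
                             - Exz x y z t - Eyz x y z t)) /\
  (* symmetry *)
  (forall x y z t, 0 < t -> E0 D x y z t = E0 D y x z t) /\
  (* consistency conditions *)
  (forall x z t, 0 < t -> E0 D x 0 z t = erfc (x / ell0 D t)) /\
  (forall y z t, 0 < t -> E0 D 0 y z t = erfc (y / ell0 D t)) /\
  (forall x y t, 0 < t -> E0 D x y 0 t = erfc ((x + y) / ell0 D t)) /\
  (* initial condition: E -> 0 as t -> 0+ for x, y, z > 0 *)
  (forall x y z, 0 < x -> 0 < y -> 0 < z ->
     limit1_in (fun t => E0 D x y z t) (fun t => 0 < t) 0 0) /\
  (* decoupling as z -> +infinity *)
  (forall x y t, 0 < t ->
     forall eps, 0 < eps -> exists M, forall z, M < z ->
       Rabs (E0 D x y z t - erfc (x / ell0 D t) * erfc (y / ell0 D t)) < eps).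
Proof.
  split; [apply PDE_part; auto|].
  split; [intros; apply main_sym|].
  split.
  { intros x z t _. unfold E0; cbv zeta. rewrite zero_div, erfc_0.
    replace (x + 0 + z) with (x + z) by ring. replace (0 + z) with z by ring. unfold Rdiv; ring. }
  split.
  { intros y z t _. unfold E0; cbv zeta. rewrite zero_div, erfc_0.
    replace (0 + y + z) with (y + z) by ring. replace (0 + z) with z by ring. unfold Rdiv; ring. }
  split.
  { intros x y t _. unfold E0; cbv zeta. rewrite zero_div, erfc_0.
    replace (x + y + 0) with (x + y) by ring. replace (x + 0) with x by ring.
    replace (y + 0) with y by ring. unfold Rdiv; ring. }
  split; [apply limit_part; auto|].
  apply decouple_part; auto.
Qed.
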